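(* Let $\hat q,\hat p$ be $n\times n$ parametric matrices and $M$ an $n\times n$ $(\hat q,\hat p)$-Manin matrix over $\mathfrak R$ which is invertible and such that $\mathrm{cdet}_{\hat q}(M)$ is invertible in $\mathfrak R$. Then for all $1\le i,j\le n$, $$(M^{-1})_{ij}=\varepsilon(\hat p,i^c\oplus i)^{-1}\,\varepsilon(\hat q,j^c\oplus j)\,\mathrm{cdet}_{\hat q}(M)^{-1}\,\mathrm{cdet}_{\hat q}(M_{j^c i^c}),$$ where for $a\in\{1,\dots,n\}$, $a^c$ denotes the increasing multi-index $(1,\dots,\hat a,\dots,n)$ obtained by deleting $a$, and $a^c\oplus a=(1,\dots,\hat a,\dots,n,a)$.
   Context: $\mathfrak R$ is an associative unital algebra over $\mathbb C$. A parametric $n\times n$ matrix is a matrix $\hat q=(q_{ij})$ of nonzero complex numbers with $q_{ij}q_{ji}=1$, $q_{ii}=1$. An $n\times n$ matrix $M$ over $\mathfrak R$ is a $(\hat q,\hat p)$-Manin matrix if $M_{ik}M_{jk}=q_{ji}M_{jk}M_{ik}$ for $i<j$ and all $k$, and $M_{ik}M_{jl}-q_{ji}p_{kl}M_{jl}M_{ik}+p_{kl}M_{il}M_{jk}-q_{ji}M_{jk}M_{il}=0$ for $i<j$, $k<l$. For a multi-index $I=(i_1,\dots,i_r)$, $\varepsilon(\hat q,I)=0$ if two entries coincide, otherwise $\varepsilon(\hat q,I)=\prod_{s<t,\ i_s>i_t}(-q_{i_si_t})$. For increasing $I=(i_1<\dots<i_r)$ and $\sigma\in S_r$, $\varepsilon(\hat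 q,I,\sigma)=\prod_{s<t,\ \sigma(s)>\sigma(t)}(-q_{i_{\sigma(s)}i_{\sigma(t)}})$. For increasing $I$ and any multi-index $J=(j_1,\dots,j_r)$, $\mathrm{cdet}_{\hat q}(M_{IJ})=\sum_{\sigma\in S_r}\varepsilon(\hat q,I,\sigma)M_{i_{\sigma(1)},j_1}\cdots M_{i_{\sigma(r)},j_r}$; $\mathrm{cdet}_{\hat q}(M)$ is the case $I=J=(1,\dots,n)$. *)

(* Defs.v *)
From HB Require Import structures.
From mathcomp Require Import all_boot all_order all_algebra all_fingroup.
From mathcomp.real_closed Require Import complex.
From mathcomp Require Import Rstruct.
Set Implicit Arguments. Unset Strict Implicit. Unset Printing Implicit Defensive.
Import Order.TTheory GRing.Theory Num.Theory.
Local Open Scope ring_scope.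

Definition C : fieldType := complex Rdefinitions.R.

Definition parametric (n : nat) (q : 'M[C]_n) : Prop :=
  (forall i j, q i j != 0) /\ (forall i j, q i j * q j i = 1) /\ (forall i, q i i = 1).

Definition manin (A : algType C) (n : nat) (q p : 'M[C]_n) (M : 'M[A]_n) : Prop :=
  (forall (i j k : 'I_n), (i < j)%N ->
      M i k * M j k = q j i *: (M j k * M i k)) /\
  (forall (i j k l : 'I_n), (i < j)%N -> (k < l)%N ->
      M i k * M j l - (q j i * p k l) *: (M j l * M i k)
      + p k l *: (M i l * M j k) - q j i *: (M j k * M i l) = 0).

Definition eps (n : nat) (q : 'M[C]_n) (s : seq 'I_n) : C :=
  if uniq s then
    \prod_(x : 'I_(size s))
      \prod_(y : 'I_(size s) | (x < y)%N && (tnth (in_tuple s) y < tnth (in_tuple s) x)%N)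
        (- q (tnth (in_tuple s) x) (tnth (in_tuple s) y))
  else 0.

Definition eps_perm (n r : nat) (q : 'M[C]_n) (I : r.-tuple 'I_n) (s : 'S_r) : C :=
  \prod_(x : 'I_r) \prod_(y : 'I_r | (x < y)%N && (s y < s x)%N)
     (- q (tnth I (s x)) (tnth I (s y))).

(* cdet_q(M_{IJ}); the product over k is the ordered product (left to right). *)
Definition cdet (A : algType C) (n r : nat) (q : 'M[C]_n) (M : 'M[A]_n)
    (I J : r.-tuple 'I_n) : A :=
  \sum_(s : 'S_r) eps_perm q I s *: \prod_(k < r) M (tnth I (s k)) (tnth J k).

Definition cdet_full (A : algType C) (n : nat) (q : 'M[C]_n) (M : 'M[A]_n) : A :=
  cdet q M (ord_tuple n) (ord_tuple n).

Definition compl_seq (n : nat) (a : 'I_n) : seq 'I_n := [seq k <- enum 'I_n | k != a].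

Lemma compl_seq_size (n : nat) (a : 'I_n) : size (compl_seq a) == n.-1.
Proof.
rewrite /compl_seq size_filter.
have -> : n.-1 = #|[pred k : 'I_n | k != a]| by rewrite cardC1 card_ord.
rewrite cardE /enum_mem size_filter /=.
by rewrite filter_predT.
Qed.

Definition compl (n : nat) (a : 'I_n) : (n.-1).-tuple 'I_n := Tuple (compl_seq_size a).

Definition compl_plus (n : nat) (a : 'I_n) : seq 'I_n := rcons (compl_seq a) a.

(* Main.v *)
Require Import Defs.
From HB Require Import structures.
From mathcomp Require Import all_boot all_order all_algebra all_fingroup.
From mathcomp.real_closed Require Import complex.
From mathcomp Require Import Rstruct.
From mathcomp Require Import ring.
Import GRing.Theory.
Local Open Scope ring_scope.
Section Eps.
Context {n : nat}.
Implicit Types (q : 'M[C]_n) (s : seq 'I_n).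

Fixpoint epsr q s : C := match s with
 | [::] => 1
 | x :: s' => (\prod_(y <- s' | (y < x)%N) (- q x y)) * epsr q s' end.

Lemma epsr_map r (f : 'I_r -> 'I_n) q :
  \prod_(x : 'I_r) \prod_(y : 'I_r | (x < y)%N && (f y < f x)%N) (- q (f x) (f y))
  = epsr q (map f (enum 'I_r)).
Proof.
elim: r f => [|r IH] f; first by rewrite big_ord0 enum_ord0.
rewrite enum_ordSl /= big_ord_recl /= -map_comp -IH.
congr (_ * _).
  rewrite big_mkcond big_ord_recl /= mul1r big_map big_enum_cond /= big_mkcond [RHS]big_mkcond /=.
  by apply: eq_bigr => y _.
apply: eq_bigr => x _; rewrite big_mkcond big_ord_recl /= mul1r big_mkcond /=.
by rewrite [RHS]big_mkcond; apply: eq_bigr => y _; rewrite /bump /= !add1n ltnS.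
Qed.

Lemma eps_epsr q s : eps q s = if uniq s then epsr q s else 0.
Proof.
rewrite /eps; case: ifP => // _.
have := epsr_map _ (tnth (in_tuple s)) q; rewrite map_tnth_enum => <-.
done.
Qed.
End Eps.
Arguments epsr {n} q s.
Section Eps2.
Context {n : nat}.
Implicit Types (q : 'M[C]_n) (s a b : seq 'I_n).

Lemma epsr_swap q a b (x y : 'I_n) : (x < y)%N ->
  epsr q (a ++ y :: x :: b) = - q y x * epsr q (a ++ x :: y :: b).
Proof.
move=> lxy; elim: a => [|z a IH] /=.
  rewrite !big_cons lxy ltnNge (ltnW lxy) /=.
  by ring.
rewrite IH mulrCA; congr (_ * (_ * _)).
apply: perm_big; rewrite perm_cat2l.
by rewrite (perm_catCA [:: y] [:: x]).
Qed.
End Eps2.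
Section Eps3.
Context {n : nat}.
Implicit Types (q : 'M[C]_n) (s a b : seq 'I_n).

Lemma epsr_rcons q s (k : 'I_n) :
  epsr q (rcons s k) = epsr q s * \prod_(x <- s | (k < x)%N) (- q x k).
Proof.
elim: s => [|z s IH] /=; first by rewrite !big_nil mulr1.
rewrite IH big_rcons big_cons /=; case: ifP => _; by ring.
Qed.

Fixpoint inv s : nat := match s with
 | [::] => 0%N
 | x :: s' => (count (fun y : 'I_n => (y < x)%N) s' + inv s')%N end.

Lemma inv_swap a b (x y : 'I_n) : (y < x)%N ->
  inv (a ++ x :: y :: b) = (inv (a ++ y :: x :: b)).+1.
Proof.
move=> lyx; elim: a => [|z a IH] /=.
  by rewrite lyx ltnNge (ltnW lyx) /= add0n add1n addSn addnCA.
rewrite IH addnS.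
have /seq.permP -> // : perm_eq (a ++ [:: x, y & b]) (a ++ [:: y, x & b]).
by rewrite perm_cat2l (perm_catCA [:: x] [:: y]).
Qed.

Lemma inv0_epsr q s : inv s = 0%N -> epsr q s = 1.
Proof.
elim: s => //= x s IH /eqP; rewrite addn_eq0 => /andP[/eqP c /eqP i].
rewrite IH // mulr1 -big_filter.
by move: c; rewrite -size_filter => /size0nil ->; rewrite big_nil.
Qed.

Lemma inv0_sorted s : inv s = 0%N -> sorted (fun x y : 'I_n => (x <= y)%N) s.
Proof.
elim: s => //= x s IH /eqP; rewrite addn_eq0 => /andP[/eqP c /eqP i].
case: s c i IH => [|y s] //= c i IH.
have : ~~ (y < x)%N by move: c; case: (y < x)%N.
by rewrite -leqNgt => ->; apply: IH.
Qed.

Lemma inv_descent s : (0 < inv s)%N ->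
  exists a x y b, s = a ++ x :: y :: b /\ (y < x)%N.
Proof.
elim: s => //= z s IH.
case: (posnP (inv s)) => [i0|/IH[a [x [y [b [-> l]]]]]]; last first.
  by move=> _; exists (z :: a), x, y, b.
rewrite i0 addn0.
case: s i0 IH => [|w s] //= i0 _.
case: (ltnP w z) => [lwz|lzw] H; first by exists [::], z, w, s.
move: H; rewrite add0n -has_count => /hasP[u us luz].
move: i0 => /eqP; rewrite addn_eq0 => /andP[/eqP c _].
have : has (fun y : 'I_n => (y < w)%N) s.
  by apply/hasP; exists u => //; apply: leq_trans luz lzw.
by rewrite has_count c.
Qed.

Lemma sorted_dup s : sorted (fun x y : 'I_n => (x <= y)%N) s -> ~~ uniq s ->
  exists a x b, s = a ++ x :: x :: b.
Proof.
elim: s => //= z s IH Hs; rewrite negb_and negbK.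
case/orP => [zs | us]; last first.
  have [a [x [b ->]]] := IH (path_sorted Hs) us.
  by exists (z :: a), x, b.
case: s Hs zs IH => //= w s /andP[lzw Hp]; rewrite inE => /orP[/eqP <-|zs] _.
  by exists [::], z, s.
have /allP /(_ z zs) lwz := order_path_min (fun (y x z : 'I_n) => @leq_trans y x z) Hp.
have wz : w = z by apply/val_inj/eqP; rewrite eqn_leq lwz lzw.
by rewrite wz; exists [::], z, s.
Qed.
End Eps3.
Lemma lin4' (V : lmodType C) (Y1 Y2 Y3 Y4 : V) (a c : C) :
  Y1 - (c * a) *: Y2 + a *: Y3 - c *: Y4 = 0 -> Y1 - c *: Y4 = - a *: (Y3 - c *: Y2).
Proof.
move=> H; apply/eqP; rewrite -subr_eq0 -H; apply/eqP.
rewrite scalerBr !scaleNr opprB opprK scalerA [a * c]mulrC.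
by rewrite -!addrA; congr (_ + _); rewrite addrC -!addrA; congr (_ + _).
Qed.

Lemma lin4 (V : lmodType C) (X1 X2 X3 X4 : V) (a b c : C) : b * a = 1 ->
  X1 - (c * a) *: X2 + a *: X3 - c *: X4 = 0 -> X3 - c *: X2 = - b *: (X1 - c *: X4).
Proof.
move=> ab /lin4' ->; by rewrite scalerA mulrN mulNr opprK ab scale1r.
Qed.

Section Alg.
Variables (A : algType C) (n : nat) (q p : 'M[C]_n) (M : 'M[A]_n).
Hypothesis (pp : parametric p) (mm : manin q p M).

Definition Pr (s c : seq 'I_n) : A := \prod_(xy <- zip s c) M xy.1 xy.2.
Definition Dm x y k l := M x k * M y l - q y x *: (M y k * M x l).

Lemma Dm_swap (x y k l : 'I_n) : (x < y)%N -> Dm x y l k = - p l k *: Dm x y k l.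
Proof.
move=> lxy; case: pp => _ [pinv p1]; case: mm => R1 R2.
case: (ltngtP k l) => [lkl|llk|ekl].
- by apply: lin4; [rewrite mulrC; apply: pinv | apply: R2].
- by apply: lin4'; apply: R2.
- have -> : l = k by apply/val_inj.
  by rewrite /Dm R1 // subrr scaler0.
Qed.

Lemma Pr_cat a c1 x y k l b c2 : size a = size c1 ->
  Pr (a ++ x :: y :: b) (c1 ++ k :: l :: c2) = Pr a c1 * (M x k * (M y l * Pr b c2)).
Proof. by move=> h; rewrite /Pr zip_cat // big_cat /= !big_cons. Qed.

Lemma pair_term (e : C) a c1 x y k l b c2 : size a = size c1 ->
  e *: Pr (a ++ x :: y :: b) (c1 ++ k :: l :: c2)
  + (- q y x * e) *: Pr (a ++ y :: x :: b) (c1 ++ k :: l :: c2)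
  = e *: (Pr a c1 * (Dm x y k l * Pr b c2)).
Proof.
move=> h; rewrite !Pr_cat // [(- q y x * e)]mulrC -scalerA -scalerDr; congr (_ *: _).
by rewrite /Dm mulrBl mulrBr -scalerAl scalerAr scaleNr !mulrA mulrN.
Qed.

Lemma pair_sum (G : 'S_n -> A) (t0 t1 : 'I_n) : t0 != t1 ->
  \sum_(s : 'S_n) G s = \sum_(s : 'S_n | (s t0 < s t1)%N) (G s + G (tperm t0 t1 * s)%g).
Proof.
move=> ne; rewrite big_split /= [LHS](bigID (fun s : 'S_n => (s t0 < s t1)%N)) /=.
congr (_ + _); rewrite (reindex_inj (mulgI (tperm t0 t1))) /=.
apply: eq_bigl => s; rewrite !permM tpermL tpermR -leqNgt leq_eqVlt.
have -> // : (nat_of_ord (s t0) == s t1) = false.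
by apply/negbTE; apply: contra ne => /eqP/val_inj/perm_inj ->.
Qed.

Lemma swap_enum (t0 t1 : 'I_n) a b : enum 'I_n = a ++ t0 :: t1 :: b ->
  map (tperm t0 t1) (enum 'I_n) = a ++ t1 :: t0 :: b.
Proof.
move=> E; have := enum_uniq 'I_n; rewrite E cat_uniq.
case/and3P => _ /hasPn H1 H2.
have nt0a : t0 \notin a by apply: H1; rewrite mem_head.
have nt1a : t1 \notin a by apply: H1; rewrite !inE eqxx orbT.
move: H2; rewrite !cons_uniq in_cons negb_or => /andP[/andP[n01 nt0b] /andP[nt1b _]].
rewrite map_cat /= tpermL tpermR; congr (_ ++ _ :: _ :: _); apply: map_id_in => z zin.
- by apply: tpermD; [move: nt0a | move: nt1a]; apply: contraNneq => ->.
- apply: tpermD; [move: nt0b | move: nt1b]; apply: contraNneq => ->; rewrite ?inE ?zin ?orbT //.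
Qed.

Definition FRs (c : seq 'I_n) : A :=
  \sum_(s : 'S_n) epsr q (map s (enum 'I_n)) *: Pr (map s (enum 'I_n)) c.

Lemma enum_split t (x0 : 'I_n) : (t.+1 < n)%N ->
  exists a b t0 t1, enum 'I_n = a ++ t0 :: t1 :: b /\ size a = t.
Proof.
move=> h; set e := enum 'I_n.
have se : size e = n by rewrite size_enum_ord.
exists (take t e), (drop t.+2 e), (nth x0 e t), (nth x0 e t.+1); split.
  rewrite -{1}(cat_take_drop t e) (drop_nth x0); last by rewrite se ltnW.
  by rewrite (drop_nth x0 (_ : t.+1 < size e)%N) // se.
by rewrite size_take se (ltnW h).
Qed.

Lemma FRs_pair c1 c2 (k l : 'I_n) : size (c1 ++ k :: l :: c2) = n ->
  exists t0 t1 : 'I_n, exists F : 'S_n -> C, exists G1 G2 : 'S_n -> A,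
   (forall k' l', FRs (c1 ++ k' :: l' :: c2) =
     \sum_(s : 'S_n | (s t0 < s t1)%N) F s *: (G1 s * (Dm (s t0) (s t1) k' l' * G2 s)))
   /\ (forall s : 'S_n, (s t0 < s t1)%N -> (s t0 < s t1)%N).
Proof.
move=> sz.
have h1 : ((size c1).+1 < n)%N.
  apply: (@leq_trans (size (c1 ++ [:: k, l & c2]))); last by rewrite sz.
  by rewrite size_cat /= !addnS !ltnS leq_addr.
have [a [b [t0 [t1 [E sa]]]]] := enum_split (size c1) k h1.
have ne : t0 != t1.
  by have := enum_uniq 'I_n; rewrite E cat_uniq => /and3P[_ _] /= /andP[]; rewrite inE negb_or => /andP[].
exists t0, t1, (fun s => epsr q (map s (enum 'I_n))), (fun s => Pr (map s a) c1),
  (fun s => Pr (map s b) c2); split => // k' l'.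
rewrite /FRs (pair_sum _ t0 t1 ne); apply: eq_bigr => s lt.
have Es : map s (enum 'I_n) = map s a ++ s t0 :: s t1 :: map s b by rewrite E map_cat.
have Ets : map (tperm t0 t1 * s)%g (enum 'I_n) = map s a ++ s t1 :: s t0 :: map s b.
  by rewrite (eq_map (permM (tperm t0 t1) s)) map_comp (swap_enum _ _ _ _ E) map_cat.
by rewrite Ets Es (@epsr_swap _ q _ _ _ _ lt) pair_term // size_map sa.
Qed.

Lemma FRs_swap c1 c2 (k l : 'I_n) : size (c1 ++ k :: l :: c2) = n ->
  FRs (c1 ++ l :: k :: c2) = - p l k *: FRs (c1 ++ k :: l :: c2).
Proof.
move=> /FRs_pair [t0 [t1 [F [G1 [G2 [E _]]]]]].
rewrite !E scaler_sumr; apply: eq_bigr => s lt.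
by rewrite Dm_swap // -scalerAl -scalerAr !scalerA mulrC.
Qed.

Lemma FRs_dup c1 c2 (k : 'I_n) : size (c1 ++ k :: k :: c2) = n ->
  FRs (c1 ++ k :: k :: c2) = 0.
Proof.
move=> /FRs_pair [t0 [t1 [F [G1 [G2 [E _]]]]]].
rewrite E big1 // => s lt; case: mm => R1 _.
by rewrite /Dm R1 // subrr mul0r mulr0 scaler0.
Qed.

Lemma enum_sorted : sorted (fun x y : 'I_n => (x <= y)%N) (enum 'I_n).
Proof.
have := iota_ltn_sorted 0 n; rewrite -val_enum_ord sorted_map.
by apply: sub_sorted => x y /ltnW.
Qed.

Lemma uniq_full c : size c = n -> uniq c -> perm_eq c (enum 'I_n).
Proof.
move=> sz u; apply: uniq_perm => //; first exact: enum_uniq.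
have [] // := @uniq_min_size _ c (enum 'I_n) u (fun x _ => mem_enum _ x).
by rewrite size_enum_ord sz.
Qed.

Lemma sorted_full c : size c = n -> uniq c ->
  sorted (fun x y : 'I_n => (x <= y)%N) c -> c = enum 'I_n.
Proof.
move=> sz u so; apply: (sorted_eq _ _ so enum_sorted (uniq_full _ sz u)).
  by move=> y x z; apply: leq_trans.
by move=> x y /andP[h1 h2]; apply/val_inj/anti_leq/andP.
Qed.

Lemma FR_main c : size c = n -> FRs c = eps p c *: FRs (enum 'I_n).
Proof.
have [N] := ubnP (inv c); elim: N c => // N IH c ltN sz.
case: (posnP (inv c)) => [i0|ip].
  have so := inv0_sorted _ i0.
  rewrite eps_epsr; case: ifP => [u|nu].
    by rewrite inv0_epsr // scale1r {1}(sorted_full _ sz u so).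
  have [a [x [b E]]] := sorted_dup _ so (negbT nu).
  by rewrite scale0r E FRs_dup // -E.
have [a [x [y [b [E lyx]]]]] := inv_descent _ ip.
have i' : (inv (a ++ y :: x :: b) < N)%N by rewrite -ltnS -inv_swap // -E.
have sz' : size (a ++ y :: x :: b) = n by move: sz; rewrite E !size_cat.
rewrite E FRs_swap // (IH _ i' sz') scalerA; congr (_ *: _).
have pu : perm_eq (a ++ x :: y :: b) (a ++ y :: x :: b).
  by rewrite perm_cat2l (perm_catCA [:: x] [:: y]).
rewrite !eps_epsr (perm_uniq pu); case: ifP => _; last by rewrite mulr0.
by rewrite (@epsr_swap _ p a b y x lyx).
Qed.

End Alg.
Arguments Pr {A n} M s c.
Arguments FRs {A n} q M c.
Arguments uniq_full {n} c.
Arguments FR_main {A n q p M} pp mm c.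
Lemma big_ord_enum (R : Type) (idx : R) (op : R -> R -> R) r (F : 'I_r -> R) :
  \big[op/idx]_(k < r) F k = \big[op/idx]_(k <- enum 'I_r) F k.
Proof. by rewrite [index_enum _]unlock -enumT. Qed.

Lemma tuple_split (V : nmodType) (T : finType) m (F : m.+1.-tuple T -> V) :
  \sum_(t : m.+1.-tuple T) F t = \sum_(k : T) \sum_(t : m.-tuple T) F [tuple of rcons t k].
Proof.
have E (d : T) (w : seq T) : w != [::] ->
    rcons (belast (head d w) (behead w)) (last (head d w) (behead w)) = w.
  by case: w => // y s _; exact: (esym (lastI y s)).
rewrite pair_big /=.
rewrite (reindex (fun u : T * m.-tuple T => [tuple of rcons u.2 u.1])) //.
exists (fun t : m.+1.-tuple T =>
   (last (head (thead t) t) (behead t), [tuple of belast (head (thead t) t) (behead t)])).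
  case=> k t' _ /=; set w := rcons t' k.
  have := E (thead [tuple of w]) w; rewrite /w -{3}/w.
  have -> : w != [::] by rewrite /w; case: (tval t').
  move=> /(_ isT) /rcons_inj [e1 e2]; congr pair => //; apply/val_inj => /=.
  exact: e1.
move=> t _; apply/val_inj => /=; apply: E.
by case: t => [[|y s] //].
Qed.
Section Gen.
Variables (A : algType C) (n : nat) (q : 'M[C]_n) (M : 'M[A]_n).

Lemma sorted_mono r (I : r.-tuple 'I_n) : sorted (fun x y : 'I_n => (x < y)%N) I ->
  forall a b : 'I_r, (tnth I a < tnth I b)%N = (a < b)%N.
Proof.
move=> so a b; have x0 := tnth I a.
have H := sorted_ltn_nth (fun (y x z : 'I_n) => @ltn_trans y x z) x0 so.
have Hin (c : 'I_r) : (c : nat) \in [pred i | (i < size I)%N] by rewrite inE size_tuple ltn_ord.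
rewrite !(tnth_nth x0).
case: (ltngtP a b) => [lab|lba|eab].
- exact: H.
- by apply/negbTE; rewrite -leqNgt ltnW //; apply: H.
- by rewrite eab ltnn.
Qed.

Lemma cdet_conv r (I J : r.-tuple 'I_n) : sorted (fun x y : 'I_n => (x < y)%N) I ->
  cdet q M I J = \sum_(s : 'S_r) epsr q (map (tnth I \o s) (enum 'I_r)) *:
                   Pr M (map (tnth I \o s) (enum 'I_r)) J.
Proof.
move=> so; apply: eq_bigr => s _; congr (_ *: _).
  rewrite /eps_perm -epsr_map; apply: eq_bigr => x _; apply: eq_bigl => y /=.
  by rewrite sorted_mono.
by rewrite /Pr -[in RHS](map_tnth_enum J) zip_map big_map big_ord_enum.
Qed.

Lemma perm_sum r (I : r.-tuple 'I_n) (G : seq 'I_n -> A) : uniq I ->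
  \sum_(s : 'S_r) G (map (tnth I \o s) (enum 'I_r))
  = \sum_(t : r.-tuple 'I_n | perm_eq t I) G t.
Proof.
move=> uI; pose h (s : 'S_r) := [tuple tnth I (s k) | k < r].
have hv s : val (h s) = map (tnth I \o s) (enum 'I_r) by [].
have hinj : injective h.
  move=> s1 s2 /(congr1 val); rewrite !hv => E; apply/permP => k.
  move/tuple_uniqP: uI => injI; apply: injI.
  have Ek (s : 'S_r) : nth (tnth I k) (map (tnth I \o s) (enum 'I_r)) k = tnth I (s k).
    by rewrite (nth_map k) ?size_enum_ord // nth_ord_enum.
  by rewrite -!Ek E.
symmetry; transitivity (\sum_(t in h @: [set: 'S_r]) G t).
  apply: eq_bigl => t; apply/idP/imsetP.
    by case/tuple_permP => s E; exists s; rewrite ?in_setT //; apply/val_inj.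
  by case=> s _ ->; apply/tuple_permP; exists s.
rewrite big_imset; last by move=> x y _ _; apply: hinj.
by apply: eq_bigl => s; rewrite in_setT.
Qed.

Lemma FRs_all c : FRs q M c = \sum_(t : n.-tuple 'I_n) eps q t *: Pr M t c.
Proof.
rewrite /FRs.
rewrite (eq_bigr (fun s : 'S_n => (fun l => epsr q l *: Pr M l c)
            (map (tnth (ord_tuple n) \o s) (enum 'I_n)))); last first.
  move=> s _ /=; have -> // : map (tnth (ord_tuple n) \o s) (enum 'I_n) = map s (enum 'I_n).
  by apply: eq_map => i /=; rewrite tnth_ord_tuple.
rewrite (@perm_sum n (ord_tuple n) (fun l => epsr q l *: Pr M l c)); last by rewrite enum_uniq.
rewrite [RHS](bigID (fun t : n.-tuple 'I_n => perm_eq t (ord_tuple n))) /=.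
rewrite [X in _ = _ + X]big1 ?addr0.
  apply: eq_bigr => t pt; rewrite eps_epsr (perm_uniq pt) /= enum_uniq //.
move=> t npt; rewrite eps_epsr; case: ifP => u; last by rewrite scale0r.
by move: npt; rewrite (uniq_full _ (size_tuple t) u).
Qed.
End Gen.
Lemma sorted_inv0 n (s : seq 'I_n) : sorted (fun x y : 'I_n => (x <= y)%N) s -> inv s = 0%N.
Proof.
elim: s => //= x s IH so; rewrite IH ?(path_sorted so) // addn0.
have /allP H := order_path_min (fun (y x z : 'I_n) => @leq_trans y x z) so.
rewrite (eq_in_count (a2 := pred0)) ?count_pred0 // => y ys /=.
by rewrite ltnNge H.
Qed.

Lemma enum_sorted_lt n : sorted (fun x y : 'I_n => (x < y)%N) (enum 'I_n).
Proof. by have := iota_ltn_sorted 0 n; rewrite -val_enum_ord sorted_map. Qed.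

Section Lap.
Variables (A : algType C) (m : nat) (q : 'M[C]_m.+1) (M : 'M[A]_m.+1).

Lemma mem_compl (k x : 'I_m.+1) : (x \in compl_seq k) = (x != k).
Proof. by rewrite mem_filter mem_enum andbT. Qed.

Lemma compl_uniq (k : 'I_m.+1) : uniq (compl_seq k).
Proof. by rewrite filter_uniq // enum_uniq. Qed.

Lemma compl_sorted (k : 'I_m.+1) : sorted (fun x y : 'I_m.+1 => (x < y)%N) (compl k).
Proof. by apply: sorted_filter; [move=> y x z; apply: ltn_trans | apply: enum_sorted_lt]. Qed.

Lemma compl_epsr (k : 'I_m.+1) : epsr q (compl_seq k) = 1.
Proof.
apply: inv0_epsr; apply: sorted_inv0.
by apply: sub_sorted (compl_sorted k) => x y /ltnW.
Qed.

Lemma uniq_rcons_perm (t : seq 'I_m.+1) k : size t = m ->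
  uniq (rcons t k) = perm_eq t (compl_seq k).
Proof.
move=> sz; rewrite rcons_uniq; apply/andP/idP.
  case=> nk u; apply: uniq_perm => //; first exact: compl_uniq.
  have [] // := @uniq_min_size _ t (compl_seq k) u.
    by move=> x xt; rewrite mem_compl; apply: contraNneq nk => <-.
  by rewrite (eqP (compl_seq_size k)) sz.
move=> pe; split; first by rewrite (perm_mem pe) mem_compl eqxx.
by rewrite (perm_uniq pe) compl_uniq.
Qed.

Lemma eps_rcons (t : seq 'I_m.+1) k : perm_eq t (compl_seq k) ->
  eps q (rcons t k) = eps q (compl_plus k) * epsr q t.
Proof.
move=> pe.
have u1 : uniq (rcons t k).
  by rewrite rcons_uniq (perm_mem pe) (perm_uniq pe) mem_compl eqxx compl_uniq.
have u2 : uniq (compl_plus k) by rewrite rcons_uniq mem_compl eqxx compl_uniq.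
rewrite /compl_plus !eps_epsr u1 u2 !epsr_rcons compl_epsr mul1r (perm_big _ pe).
by rewrite mulrC.
Qed.

Lemma Pr_rcons (s c : seq 'I_m.+1) x y : size s = size c ->
  Pr M (rcons s x) (rcons c y) = Pr M s c * M x y.
Proof. by move=> h; rewrite /Pr zip_rcons // -cats1 big_cat big_seq1. Qed.

Lemma laplace (cs : m.-tuple 'I_m.+1) (y : 'I_m.+1) :
  \sum_k eps q (compl_plus k) *: (cdet q M (compl k) cs * M k y) = FRs q M (rcons cs y).
Proof.
rewrite FRs_all tuple_split; apply: eq_bigr => k _.
rewrite cdet_conv ?compl_sorted //.
rewrite (@perm_sum A m.+1 m (compl k) (fun l => epsr q l *: Pr M l cs)); last exact: compl_uniq.
rewrite mulr_suml scaler_sumr.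
rewrite [RHS](bigID (fun t : m.-tuple 'I_m.+1 => perm_eq t (compl_seq k))) /=.
rewrite [X in _ = _ + X]big1 ?addr0.
  apply: eq_bigr => t pt.
  by rewrite eps_rcons // Pr_rcons ?size_tuple // -scalerAl scalerA.
move=> t npt; rewrite eps_epsr uniq_rcons_perm ?size_tuple //.
by rewrite (negbTE npt) scale0r.
Qed.
End Lap.
Lemma epsr_neq0 n (p : 'M[C]_n) (s : seq 'I_n) : parametric p -> epsr p s != 0.
Proof.
case=> p0 _; elim: s => [|x s IH] /=; first exact: oner_neq0.
rewrite mulf_neq0 // prodf_seq_neq0; apply/allP => y _ /=.
by apply/implyP => _; rewrite oppr_eq0.
Qed.

Lemma FRs_full (A : algType C) n (q : 'M[C]_n) (M : 'M[A]_n) :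
  FRs q M (enum 'I_n) = cdet_full q M.
Proof.
rewrite /cdet_full cdet_conv; last exact: enum_sorted_lt.
apply: eq_bigr => s _.
have -> // : map (tnth (ord_tuple n) \o s) (enum 'I_n) = map s (enum 'I_n).
by apply: eq_map => i /=; rewrite tnth_ord_tuple.
Qed.

Theorem mainTheorem4 (A : algType C) (n : nat) (q p : 'M[C]_n) (M : 'M[A]_n) :
  parametric q -> parametric p -> manin q p M ->
  forall Minv : 'M[A]_n, M *m Minv = 1%:M -> Minv *m M = 1%:M ->
  forall d : A, cdet_full q M * d = 1 -> d * cdet_full q M = 1 ->
  forall i j : 'I_n,
    Minv i j = ((eps p (compl_plus i))^-1 * eps q (compl_plus j))
                 *: (d * cdet q M (compl j) (compl i)).
Proof.
case: n q p M => [|m] q p M pq pp mm Minv MMi MiM d cd dc i j; first by case: i.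
pose B := \matrix_(a, b) (((eps p (compl_plus a))^-1 * eps q (compl_plus b))
                 *: (d * cdet q M (compl b) (compl a))).
have BM : B *m M = 1%:M.
  apply/matrixP => a b; rewrite !mxE.
  under eq_bigr => k _ do rewrite mxE -scalerAl -mulrA scalerAr -scalerA.
  rewrite -mulr_sumr -scaler_sumr.
  rewrite (eq_bigr (fun k => eps q (compl_plus k) *: (cdet q M (compl k) (compl a) * M k b))); last first.
    by move=> k _; rewrite scalerAl.
  rewrite laplace (FR_main pp mm); last by rewrite size_rcons size_tuple.
  rewrite FRs_full scalerA.
  have ne : eps p (compl_plus a) != 0.
    rewrite eps_epsr /compl_plus rcons_uniq mem_compl eqxx compl_uniq /=.
    exact: epsr_neq0.
  case: eqP => [<-|nab].
    by rewrite -/(compl_plus a) mulVf // scale1r dc.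
  have -> : eps p (rcons (compl_seq a) b) = 0.
    rewrite eps_epsr rcons_uniq mem_compl.
    by have -> : (b != a) by apply/eqP => e; apply: nab.
  by rewrite mulr0 scale0r mulr0.
have -> : Minv = B by rewrite -[Minv]mul1mx -BM -mulmxA MMi mulmx1.
by rewrite mxE.
Qed.
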